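(* Let $\mathbb K$ be a field with $2\in\mathbb K^\times$, $A$ a unital commutative associative $\mathbb K$-algebra, $\mathfrak k$ a $\mathbb K$-Lie algebra and $\mathfrak g=A\otimes\mathfrak k$. Let $p_{\mathfrak k}:\Lambda^2(\mathfrak k)\to Z_2(\mathfrak k)$ be a linear projection onto $Z_2(\mathfrak k)$, and let $\tilde f^u:=P^{-1}\circ\big(p_1,(\mathrm{id}_A\otimes p_{\mathfrak k})\circ p_2,p_3\big):\Lambda^2(\mathfrak g)\to Z_2(\mathfrak g)$. Then $\tilde f^u$ maps $B_2(\mathfrak g)$ into itself, hence induces a 2-cocycle $f^u:\Lambda^2(\mathfrak g)\to H_2(\mathfrak g)=Z_2(\mathfrak g)/B_2(\mathfrak g)$, and for every vector space $\mathfrak z$ the map $\mathrm{Lin}(H_2(\mathfrak g),\mathfrak z)\to H^2(\mathfrak g,\mathfrak z)$, $\phi\mapsto[\phi\circ f^u]$, is a linear bijection.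
   Context: $\mathfrak g$ has bracket $[a\otimes x,a'\otimes x']=aa'\otimes[x,x']$, $ax=a\otimes x$, unit $\mathbf 1$. $v\wedge w=\tfrac12(v\otimes w-w\otimes v)$, $v\vee w=\tfrac12(v\otimes w+w\otimes v)$. For a Lie algebra $\mathfrak h$: $Z_2(\mathfrak h)=\ker(\Lambda^2(\mathfrak h)\to\mathfrak h,\ u\wedge v\mapsto[u,v])$, $B_2(\mathfrak h)$ is the image of $\Lambda^3(\mathfrak h)\to\Lambda^2(\mathfrak h)$, $u\wedge v\wedge w\mapsto[u,v]\wedge w+[v,w]\wedge u+[w,u]\wedge v$, $H_2(\mathfrak h)=Z_2(\mathfrak h)/B_2(\mathfrak h)$. $H^2(\mathfrak g,\mathfrak z)$ is the space of linear maps $\Lambda^2(\mathfrak g)\to\mathfrak z$ vanishing on $B_2(\mathfrak g)$ modulo those of the form $u\wedge v\mapsto-\ell([u,v])$, $\ell:\mathfrak g\to\mathfrak z$ linear. $I_A$ is the kernel of multiplication $S^2(A)\to A$. $P=(p_1,p_2,p_3)$ is the linear isomorphism $\Lambda^2(\mathfrak g)\to(\Lambda^2(A)\otimes S^2(\mathfrak k))\oplus(A\otimes\Lambda^2(\mathfrak k))\oplus(I_A\otimes\Lambda^2(\mathfrak k))$ with $p_1(ax\wedge by)=a\wedge b\otimes x\vee y$, $p_2(ax\wedge by)=ab\otimes x\wedge y$, $p_3(ax\wedge by)=(a\vee b-ab\vee\mathbf 1)\otimes x\wedge y$. *)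

(* Defs.v *)
From HB Require Import structures.
From mathcomp Require Import all_boot all_order all_algebra.
Set Implicit Arguments. Unset Strict Implicit. Unset Printing Implicit Defensive.
Import GRing.Theory.
Local Open Scope ring_scope.

(* Tensor products, exterior and symmetric powers are given by their
   universal properties (they are unique up to unique isomorphism). *)
Section Defs.
Variable K : fieldType.

Definition lin (U V : lmodType K) (f : U -> V) : Prop :=
  forall (a : K) (x y : U), f (a *: x + y) = a *: f x + f y.

Definition bilin (U V W : lmodType K) (b : U -> V -> W) : Prop :=
  (forall x, lin (b x)) /\ (forall y, lin (fun x => b x y)).

Definition trilin (U W : lmodType K) (b : U -> U -> U -> W) : Prop :=
  (forall x y, lin (b x y)) /\ (forall x z, lin (fun y => b x y z)) /\
  (forall y z, lin (fun x => b x y z)).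

Definition generated2 (U V T : lmodType K) (t : U -> V -> T) : Prop :=
  forall (W : lmodType K) (f g : T -> W), lin f -> lin g ->
    (forall u v, f (t u v) = g (t u v)) -> forall x, f x = g x.

Definition is_tensor (U V T : lmodType K) (t : U -> V -> T) : Prop :=
  bilin t /\ generated2 t /\
  forall (W : lmodType K) (b : U -> V -> W), bilin b ->
    exists f : T -> W, lin f /\ forall u v, f (t u v) = b u v.

Definition is_ext2 (V L : lmodType K) (w : V -> V -> L) : Prop :=
  bilin w /\ (forall v, w v v = 0) /\ generated2 w /\
  forall (W : lmodType K) (b : V -> V -> W), bilin b -> (forall v, b v v = 0) ->
    exists f : L -> W, lin f /\ forall u v, f (w u v) = b u v.

Definition is_sym2 (V S : lmodType K) (s : V -> V -> S) : Prop :=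
  bilin s /\ (forall u v, s u v = s v u) /\ generated2 s /\
  forall (W : lmodType K) (b : V -> V -> W), bilin b -> (forall u v, b u v = b v u) ->
    exists f : S -> W, lin f /\ forall u v, f (s u v) = b u v.

Definition alt3 (V W : lmodType K) (b : V -> V -> V -> W) : Prop :=
  (forall u v, b u u v = 0) /\ (forall u v, b u v u = 0) /\ (forall u v, b v u u = 0).

Definition is_ext3 (V L : lmodType K) (w : V -> V -> V -> L) : Prop :=
  trilin w /\ alt3 w /\
  (forall (W : lmodType K) (f g : L -> W), lin f -> lin g ->
    (forall u v x, f (w u v x) = g (w u v x)) -> forall y, f y = g y) /\
  forall (W : lmodType K) (b : V -> V -> V -> W), trilin b -> alt3 b ->
    exists f : L -> W, lin f /\ forall u v x, f (w u v x) = b u v x.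

Definition is_lie (V : lmodType K) (br : V -> V -> V) : Prop :=
  bilin br /\ (forall x, br x x = 0) /\
  (forall x y z, br x (br y z) + br y (br z x) + br z (br x y) = 0).

End Defs.

(* Main.v *)
Require Import Defs.
From HB Require Import structures.
From mathcomp Require Import all_boot all_order all_algebra.
From mathcomp Require Import boolp classical_sets.
Import GRing.Theory.
Set Implicit Arguments. Unset Strict Implicit. Unset Printing Implicit Defensive.
Local Open Scope ring_scope.
Section LinBasics.
Variable K : fieldType.
Implicit Types U V W : lmodType K.

Lemma lin0 U V (f : U -> V) : lin f -> f 0 = 0.
Proof.
move=> H; have E := H 1 0 0; rewrite !scale1r addr0 in E.
by have := congr1 (fun z => z - f 0) E; rewrite addrK subrr => /esym.
Qed.

Lemma linD U V (f : U -> V) : lin f -> forall x y, f (x + y) = f x + f y.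
Proof. by move=> H x y; have := H 1 x y; rewrite !scale1r. Qed.

Lemma linZ U V (f : U -> V) : lin f -> forall a x, f (a *: x) = a *: f x.
Proof. by move=> H a x; have := H a x 0; rewrite !addr0 (lin0 H) addr0. Qed.

Lemma linN U V (f : U -> V) : lin f -> forall x, f (- x) = - f x.
Proof. by move=> H x; rewrite -scaleN1r (linZ H) scaleN1r. Qed.

Lemma linB U V (f : U -> V) : lin f -> forall x y, f (x - y) = f x - f y.
Proof. by move=> H x y; rewrite (linD H) (linN H). Qed.

Lemma lin_comp U V W (f : V -> W) (g : U -> V) : lin f -> lin g -> lin (fun x => f (g x)).
Proof. by move=> Hf Hg a x y; rewrite Hg Hf. Qed.

Lemma lin_add U V (f g : U -> V) : lin f -> lin g -> lin (fun x => f x + g x).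
Proof.
move=> Hf Hg a x y; rewrite Hf Hg scalerDr.
by rewrite -!addrA; congr (_ + _); rewrite addrCA.
Qed.

Lemma lin_opp U V (f : U -> V) : lin f -> lin (fun x => - f x).
Proof. by move=> Hf a x y; rewrite Hf opprD scalerN. Qed.

Lemma lin_sub U V (f g : U -> V) : lin f -> lin g -> lin (fun x => f x - g x).
Proof. by move=> Hf Hg; apply: lin_add => //; apply: lin_opp. Qed.

Lemma lin_scale U V (c : K) (f : U -> V) : lin f -> lin (fun x => c *: f x).
Proof. by move=> Hf a x y; rewrite Hf scalerDr !scalerA mulrC. Qed.

Lemma lin_zero U V : lin (fun _ : U => (0 : V)).
Proof. by move=> a x y; rewrite scaler0 addr0. Qed.

Lemma lin_id U : lin (fun x : U => x).
Proof. by []. Qed.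

Lemma bilin_alt_anti U V (b : U -> U -> V) : bilin b -> (forall v, b v v = 0) ->
  forall u v, b u v = - b v u.
Proof.
move=> [H1 H2] H0 u v; apply/eqP; rewrite -subr_eq0 opprK.
have := H0 (u + v); rewrite (linD (H1 _)) (linD (H2 _)) (linD (H2 _)) !H0.
by rewrite add0r addr0 => E; rewrite addrC E.
Qed.

End LinBasics.
Section Ext.
Variables (K : fieldType) (X Y Z : lmodType K) (m : X -> Y) (h : X -> Z).
Hypotheses (m_lin : lin m) (h_lin : lin h) (ker_mh : forall x, m x = 0 -> h x = 0).

Let Bs : set (Y * Z) := fun p => exists x, p = (m x, h x).
Let HB (G : set (Y * Z)) : set (Y * Z) := fun p => G p \/ Bs p.
Let goodG (G : set (Y * Z)) : Prop :=
  (forall y z1 z2, HB G (y, z1) -> HB G (y, z2) -> z1 = z2) /\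
  (forall a p q, HB G p -> HB G q -> HB G (a *: p.1 + q.1, a *: p.2 + q.2)).

Let Bs_fun y z1 z2 : Bs (y, z1) -> Bs (y, z2) -> z1 = z2.
Proof.
move=> [x1 [-> ->]] [x2 [E ->]].
apply/eqP; rewrite -subr_eq0 -(linB h_lin); apply/eqP/ker_mh.
by rewrite (linB m_lin) E subrr.
Qed.

Let Bs_closed a p q : Bs p -> Bs q -> Bs (a *: p.1 + q.1, a *: p.2 + q.2).
Proof. by move=> [x1 ->] [x2 ->] /=; exists (a *: x1 + x2); rewrite m_lin h_lin. Qed.

Let Bs0 : Bs (0, 0).
Proof. by exists 0; rewrite (lin0 m_lin) (lin0 h_lin). Qed.

Let chain_ok : forall F : set (set (Y * Z)), (F `<=` goodG)%classic ->
  total_on F subset -> goodG (\bigcup_(G in F) G)%classic.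
Proof.
move=> F FG Ftot.
set U := (\bigcup_(G in F) G)%classic.
have common : forall p q, HB U p -> HB U q ->
    (exists G, F G /\ HB G p /\ HB G q) \/ (Bs p /\ Bs q).
  move=> p q [[G1 FG1 G1p]|Bp] [[G2 FG2 G2q]|Bq].
  - left; have [S12|S21] := Ftot _ _ FG1 FG2.
    + by exists G2; split => //; split; left => //; apply: S12.
    + by exists G1; split => //; split; left => //; apply: S21.
  - by left; exists G1; split => //; split; [left|right].
  - by left; exists G2; split => //; split; [right|left].
  - by right.
have up : forall G p, F G -> HB G p -> HB U p.
  by move=> G p FG0 [Gp|Bp]; [left; exists G|right].
split.
- move=> y z1 z2 H1 H2; have [[G [FG0 [G1 G2]]]|[B1 B2]] := common _ _ H1 H2.
  + exact: (proj1 (FG _ FG0)) G1 G2.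
  + exact: Bs_fun B1 B2.
- move=> a p q H1 H2; have [[G [FG0 [G1 G2]]]|[B1 B2]] := common _ _ H1 H2.
  + by apply: (up G) => //; apply: (proj2 (FG _ FG0)).
  + by right; apply: Bs_closed.
Qed.

Let max_total (Am : set (Y * Z)) : goodG Am ->
  (forall Bm, (Am `<` Bm)%classic -> ~ goodG Bm) ->
  forall y, exists z, HB Am (y, z).
Proof.
move=> [Afun Aclo] Amax y.
case: (pselect (exists z, HB Am (y, z))) => // Hno; exfalso.
have HA0 : HB Am (0, 0) by right.
pose Bm : set (Y * Z) := fun p => exists d z a, HB Am (d, z) /\ p = (d + a *: y, z).
have HBm : forall p, HB Bm p -> Bm p.
  move=> p [//|Bp]; exists p.1, p.2, 0; split; first by right; case: p Bp.
  by rewrite scale0r addr0; case: p {Bp}.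
apply: (Amax Bm).
  split.
  - move=> p Ap; exists p.1, p.2, 0; split; first by left; case: p Ap.
    by rewrite scale0r addr0; case: p {Ap}.
  - move=> sub; apply: Hno; exists 0; left; apply: sub.
    by exists 0, 0, 1; split => //; rewrite scale1r add0r.
split.
- move=> y0 z1 z2 /HBm [d1 [w1 [a1 [H1 E1]]]] /HBm [d2 [w2 [a2 [H2 E2]]]].
  case: E1 => E1 ->; case: E2 => E2 ->.
  have Ed : d1 + a1 *: y = d2 + a2 *: y by rewrite -E1 -E2.
  case: (eqVneq a1 a2) => [ea|na].
    by move: Ed; rewrite ea => /addIr ed; move: H1; rewrite ed => H1; apply: Afun H1 H2.
  exfalso; apply: Hno.
  have Hd := Aclo (-1) _ _ H1 H2; rewrite /= !scaleN1r in Hd.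
  have Hc := Aclo ((a1 - a2)^-1) _ _ Hd HA0; rewrite /= !addr0 in Hc.
  exists ((a1 - a2)^-1 *: (- w1 + w2)).
  suff -> : y = (a1 - a2)^-1 *: (- d1 + d2) by [].
  have : (a1 - a2) *: y = - d1 + d2.
    by rewrite scalerBl; apply: (addrI d1); rewrite addNKr addrA Ed addrK.
  move=> <-; rewrite scalerA mulVf ?scale1r //.
  by rewrite subr_eq0.
- move=> c p q /HBm [d1 [w1 [a1 [H1 ->]]]] /HBm [d2 [w2 [a2 [H2 ->]]]] /=.
  left; exists (c *: d1 + d2), (c *: w1 + w2), (c * a1 + a2); split.
    exact: (Aclo c _ _ H1 H2).
  congr (_, _); rewrite scalerDr scalerDl scalerA.
  by rewrite -!addrA; congr (_ + _); rewrite addrCA.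
Qed.

Lemma ext_lin : exists l : Y -> Z, lin l /\ forall x, l (m x) = h x.
Proof.
have [Am [[Afun Aclo] Amax]] := Zorn_bigcup chain_ok.
have tot := max_total (conj Afun Aclo) Amax.
pose l y := proj1_sig (cid (tot y)).
have lP : forall y, HB Am (y, l y) by move=> y; exact: (proj2_sig (cid (tot y))).
exists l; split.
- move=> a x y; apply: (Afun (a *: x + y)) (lP _) _.
  exact: (Aclo a (x, l x) (y, l y) (lP x) (lP y)).
- move=> x; apply: (Afun (m x)) (lP _) _.
  by right; exists x.
Qed.
End Ext.
Lemma choice2 (A B C : Type) (P : A -> B -> C -> Prop) :
  (forall a b, exists c, P a b c) -> exists f : A -> B -> C, forall a b, P a b (f a b).
Proof.
move=> H; exists (fun a b => proj1_sig (cid (H a b))) => a b.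
exact: (proj2_sig (cid (H a b))).
Qed.

Lemma choice1 (A C : Type) (P : A -> C -> Prop) :
  (forall a, exists c, P a c) -> exists f : A -> C, forall a, P a (f a).
Proof.
move=> H; exists (fun a => proj1_sig (cid (H a))) => a.
exact: (proj2_sig (cid (H a))).
Qed.

Section TensSq.
Variables (K : fieldType) (V1 V2 S1 S2 T W : lmodType K).
Variables (w1 : V1 -> V1 -> S1) (s2 : V2 -> V2 -> S2) (tt : S1 -> S2 -> T).
Variable (beta : V1 -> V1 -> V2 -> V2 -> W).
Hypotheses (hb1 : forall b x y, lin (fun a => beta a b x y))
  (hb2 : forall a x y, lin (fun b => beta a b x y))
  (hb3 : forall a b y, lin (fun x => beta a b x y))
  (hb4 : forall a b x, lin (fun y => beta a b x y)).
Hypothesis tt_tens : is_tensor tt.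

Lemma tens_ext_sym : is_ext2 w1 -> is_sym2 s2 ->
  (forall a x y, beta a a x y = 0) -> (forall a b x y, beta a b x y = beta a b y x) ->
  exists Q : T -> W, lin Q /\ forall a b x y, Q (tt (w1 a b) (s2 x y)) = beta a b x y.
Proof.
move=> [w1_bil [w1_alt [w1_gen w1_ex]]] [s2_bil [s2_sym [s2_gen s2_ex]]] halt hsym.
have [Fn FnP] := @choice2 V1 V1 (S2 -> W) (fun a b F => lin F /\ forall x y, F (s2 x y) = beta a b x y)
  (fun a b => s2_ex W (beta a b) (conj (hb4 a b) (hb3 a b)) (hsym a b)).
have Fa : forall b s, lin (fun a => Fn a b s).
  move=> b s c a a'; apply: (s2_gen _ (Fn (c *: a + a') b) (fun s => c *: Fn a b s + Fn a' b s)).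
  - exact: (proj1 (FnP _ _)).
  - by apply: lin_add; [apply: lin_scale|]; exact: (proj1 (FnP _ _)).
  - by move=> x y; rewrite !(proj2 (FnP _ _)) hb1.
have Fb : forall a s, lin (fun b => Fn a b s).
  move=> a s c b b'; apply: (s2_gen _ (Fn a (c *: b + b')) (fun s => c *: Fn a b s + Fn a b' s)).
  - exact: (proj1 (FnP _ _)).
  - by apply: lin_add; [apply: lin_scale|]; exact: (proj1 (FnP _ _)).
  - by move=> x y; rewrite !(proj2 (FnP _ _)) hb2.
have Falt : forall a s, Fn a a s = 0.
  move=> a s; apply: (s2_gen _ (Fn a a) (fun _ => 0)).
  - exact: (proj1 (FnP _ _)).
  - exact: lin_zero.
  - by move=> x y; rewrite (proj2 (FnP _ _)) halt.
have [Gn GnP] := @choice1 S2 (S1 -> W) (fun s G => lin G /\ forall a b, G (w1 a b) = Fn a b s)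
  (fun s => w1_ex W (fun a b => Fn a b s) (conj (fun a => Fb a s) (fun b => Fa b s)) (fun a => Falt a s)).
have Gs : forall l, lin (fun s => Gn s l).
  move=> l c s s'; apply: (w1_gen _ (Gn (c *: s + s')) (fun l => c *: Gn s l + Gn s' l)).
  - exact: (proj1 (GnP _)).
  - by apply: lin_add; [apply: lin_scale|]; exact: (proj1 (GnP _)).
  - by move=> a b; rewrite !(proj2 (GnP _)) (proj1 (FnP _ _)).
have [Q [Qlin QP]] := (proj2 (proj2 tt_tens)) W (fun l s => Gn s l) (conj Gs (fun s => proj1 (GnP s))).
by exists Q; split => // a b x y; rewrite QP (proj2 (GnP _)) (proj2 (FnP _ _)).
Qed.

Lemma tens_sym_ext : is_sym2 w1 -> is_ext2 s2 ->
  (forall a b x y, beta a b x y = beta b a x y) -> (forall a b x, beta a b x x = 0) ->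
  exists Q : T -> W, lin Q /\ forall a b x y, Q (tt (w1 a b) (s2 x y)) = beta a b x y.
Proof.
move=> [w1_bil [w1_sym [w1_gen w1_ex]]] [s2_bil [s2_alt [s2_gen s2_ex]]] hsym halt.
have [Fn FnP] := @choice2 V1 V1 (S2 -> W) (fun a b F => lin F /\ forall x y, F (s2 x y) = beta a b x y)
  (fun a b => s2_ex W (beta a b) (conj (hb4 a b) (hb3 a b)) (halt a b)).
have Fa : forall b s, lin (fun a => Fn a b s).
  move=> b s c a a'; apply: (s2_gen _ (Fn (c *: a + a') b) (fun s => c *: Fn a b s + Fn a' b s)).
  - exact: (proj1 (FnP _ _)).
  - by apply: lin_add; [apply: lin_scale|]; exact: (proj1 (FnP _ _)).
  - by move=> x y; rewrite !(proj2 (FnP _ _)) hb1.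
have Fb : forall a s, lin (fun b => Fn a b s).
  move=> a s c b b'; apply: (s2_gen _ (Fn a (c *: b + b')) (fun s => c *: Fn a b s + Fn a b' s)).
  - exact: (proj1 (FnP _ _)).
  - by apply: lin_add; [apply: lin_scale|]; exact: (proj1 (FnP _ _)).
  - by move=> x y; rewrite !(proj2 (FnP _ _)) hb2.
have Fsym : forall a b s, Fn a b s = Fn b a s.
  move=> a b s; apply: (s2_gen _ (Fn a b) (Fn b a)).
  - exact: (proj1 (FnP _ _)).
  - exact: (proj1 (FnP _ _)).
  - by move=> x y; rewrite !(proj2 (FnP _ _)) hsym.
have [Gn GnP] := @choice1 S2 (S1 -> W) (fun s G => lin G /\ forall a b, G (w1 a b) = Fn a b s)
  (fun s => w1_ex W (fun a b => Fn a b s) (conj (fun a => Fb a s) (fun b => Fa b s)) (fun a b => Fsym a b s)).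
have Gs : forall l, lin (fun s => Gn s l).
  move=> l c s s'; apply: (w1_gen _ (Gn (c *: s + s')) (fun l => c *: Gn s l + Gn s' l)).
  - exact: (proj1 (GnP _)).
  - by apply: lin_add; [apply: lin_scale|]; exact: (proj1 (GnP _)).
  - by move=> a b; rewrite !(proj2 (GnP _)) (proj1 (FnP _ _)).
have [Q [Qlin QP]] := (proj2 (proj2 tt_tens)) W (fun l s => Gn s l) (conj Gs (fun s => proj1 (GnP s))).
by exists Q; split => // a b x y; rewrite QP (proj2 (GnP _)) (proj2 (FnP _ _)).
Qed.
End TensSq.
Lemma gen_wt (K : fieldType) (A k g Lg W : lmodType K) (t : A -> k -> g) (wg : g -> g -> Lg) :
  generated2 t -> bilin wg -> generated2 wg ->
  forall (F G : Lg -> W), lin F -> lin G ->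
  (forall a x b y, F (wg (t a x) (t b y)) = G (wg (t a x) (t b y))) -> forall z, F z = G z.
Proof.
move=> tg [wb1 wb2] wgen F G HF HG E; apply: (wgen W F G HF HG) => u v.
apply: (tg W (fun v => F (wg u v)) (fun v => G (wg u v))).
- exact: (lin_comp HF (wb1 u)).
- exact: (lin_comp HG (wb1 u)).
move=> b y; apply: (tg W (fun u => F (wg u (t b y))) (fun u => G (wg u (t b y)))).
- exact: (lin_comp HF (wb2 _)).
- exact: (lin_comp HG (wb2 _)).
by move=> a x; apply: E.
Qed.

Lemma gen_tri (K : fieldType) (A k g W : lmodType K) (t : A -> k -> g) (J : g -> g -> g -> W) :
  generated2 t ->
  (forall v w, lin (fun u => J u v w)) -> (forall u w, lin (fun v => J u v w)) ->
  (forall u v, lin (fun w => J u v w)) ->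
  (forall a x b y c z, J (t a x) (t b y) (t c z) = 0) -> forall u v w, J u v w = 0.
Proof.
move=> tg H1 H2 H3 E u v w.
apply: (tg W (fun u => J u v w) (fun _ => 0) (H1 v w) (@lin_zero _ _ _)) => a x.
apply: (tg W (fun v => J (t a x) v w) (fun _ => 0) (H2 _ w) (@lin_zero _ _ _)) => b y.
apply: (tg W (fun w => J (t a x) (t b y) w) (fun _ => 0) (H3 _ _) (@lin_zero _ _ _)) => c z.
exact: E.
Qed.
Theorem proposition3p9
  (K : fieldType) (two_unit : (2%:R : K) != 0)
  (A : comAlgType K)
  (k : lmodType K) (br : k -> k -> k) (k_lie : is_lie br)
  (* g = A (x) k, t a x = a x, with bracket [ax, a'x'] = aa'[x,x'] *)
  (g : lmodType K) (t : A -> k -> g) (g_tens : is_tensor t)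
  (brg : g -> g -> g) (brg_bil : bilin brg)
  (brg_def : forall a b x y, brg (t a x) (t b y) = t (a * b) (br x y))
  (* Lambda^2(g), Lambda^3(g) *)
  (Lg : lmodType K) (wg : g -> g -> Lg) (Lg_ext : is_ext2 wg)
  (L3g : lmodType K) (w3 : g -> g -> g -> L3g) (L3g_ext : is_ext3 w3)
  (* bg : Lambda^2(g) -> g, u /\ v |-> [u,v]  (Z_2(g) = ker bg) *)
  (bg : Lg -> g) (bg_lin : lin bg) (bg_def : forall u v, bg (wg u v) = brg u v)
  (* d3 : Lambda^3(g) -> Lambda^2(g)  (B_2(g) = im d3) *)
  (d3 : L3g -> Lg) (d3_lin : lin d3)
  (d3_def : forall u v w, d3 (w3 u v w) =
      wg (brg u v) w + wg (brg v w) u + wg (brg w u) v)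
  (* Lambda^2(k), S^2(k), and bk : Lambda^2(k) -> k  (Z_2(k) = ker bk) *)
  (Lk : lmodType K) (wk : k -> k -> Lk) (Lk_ext : is_ext2 wk)
  (Sk : lmodType K) (sk : k -> k -> Sk) (Sk_sym : is_sym2 sk)
  (bk : Lk -> k) (bk_lin : lin bk) (bk_def : forall x y, bk (wk x y) = br x y)
  (* Lambda^2(A), S^2(A) *)
  (LA : lmodType K) (wA : A -> A -> LA) (LA_ext : is_ext2 wA)
  (SA : lmodType K) (sA : A -> A -> SA) (SA_sym : is_sym2 sA)
  (* T1 = Lambda^2(A) (x) S^2(k), T2 = A (x) Lambda^2(k), T3 = S^2(A) (x) Lambda^2(k)
     (T3 contains I_A (x) Lambda^2(k)) *)
  (T1 : lmodType K) (t1 : LA -> Sk -> T1) (T1_tens : is_tensor t1)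
  (T2 : lmodType K) (t2 : A -> Lk -> T2) (T2_tens : is_tensor t2)
  (T3 : lmodType K) (t3 : SA -> Lk -> T3) (T3_tens : is_tensor t3)
  (* the components p1, p2, p3 of P *)
  (p1 : Lg -> T1) (p1_lin : lin p1)
  (p1_def : forall a b x y, p1 (wg (t a x) (t b y)) = t1 (wA a b) (sk x y))
  (p2 : Lg -> T2) (p2_lin : lin p2)
  (p2_def : forall a b x y, p2 (wg (t a x) (t b y)) = t2 (a * b) (wk x y))
  (p3 : Lg -> T3) (p3_lin : lin p3)
  (p3_def : forall a b x y, p3 (wg (t a x) (t b y)) =
      t3 (sA a b - sA (a * b) 1) (wk x y))
  (* p_k : linear projection of Lambda^2(k) onto Z_2(k) *)
  (pk : Lk -> Lk) (pk_lin : lin pk) (pk_Z2 : forall z, bk (pk z) = 0)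
  (pk_id : forall z, bk z = 0 -> pk z = z)
  (* id_A (x) p_k on T2 *)
  (idpk : T2 -> T2) (idpk_lin : lin idpk)
  (idpk_def : forall a z, idpk (t2 a z) = t2 a (pk z))
  (* ftilde = P^{-1} o (p1, (id_A (x) p_k) o p2, p3), i.e. P o ftilde = (p1, (id (x) p_k) o p2, p3) *)
  (ft : Lg -> Lg) (ft_lin : lin ft)
  (ft_p1 : forall x, p1 (ft x) = p1 x)
  (ft_p2 : forall x, p2 (ft x) = idpk (p2 x))
  (ft_p3 : forall x, p3 (ft x) = p3 x) :
  (* ftilde takes values in Z_2(g) *)
  (forall x, bg (ft x) = 0) /\
  (* ftilde maps B_2(g) into B_2(g) *)
  (forall x, (exists y, d3 y = x) -> exists y, d3 y = ft x) /\
  forall z : lmodType K,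
    (* phi : H_2(g) -> z linear is represented by phi : Lg -> z, linear on Z_2(g)
       and vanishing on B_2(g) (values outside Z_2(g) are irrelevant) *)
    let linH2 (phi : Lg -> z) :=
      (forall (a : K) x y, bg x = 0 -> bg y = 0 -> phi (a *: x + y) = a *: phi x + phi y)
      /\ (forall y, phi (d3 y) = 0) in
    (* phi o f^u is a 2-cocycle on g with values in z *)
    (forall phi, linH2 phi -> lin (fun x => phi (ft x)) /\ (forall y, phi (ft (d3 y)) = 0)) /\
    (* injectivity: [phi o f^u] = [psi o f^u] in H^2(g,z) implies phi = psi on H_2(g) *)
    (forall phi psi, linH2 phi -> linH2 psi ->
       (exists l : g -> z, lin l /\
          forall u v, phi (ft (wg u v)) - psi (ft (wg u v)) = - l (brg u v)) ->
       forall x, bg x = 0 -> phi x = psi x) /\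
    (* surjectivity: every class in H^2(g,z) is [phi o f^u] *)
    (forall c : Lg -> z, lin c -> (forall y, c (d3 y) = 0) ->
       exists phi, linH2 phi /\
         exists l : g -> z, lin l /\
           forall u v, c (wg u v) - phi (ft (wg u v)) = - l (brg u v)).
Proof.
have [t_bil [t_gen t_ex]] := g_tens.
have [brg1 brg2] := brg_bil.
have [wg_bil [wg_alt [wg_gen wg_ex]]] := Lg_ext.
have [w3_tri [w3_alt [w3_gen w3_ex]]] := L3g_ext.
have [t2_bil [t2_gen t2_ex]] := T2_tens.
have [t3_bil [t3_gen t3_ex]] := T3_tens.
have [sA_bil _] := SA_sym.
have [br_bil [br_alt br_jac]] := k_lie.
have genL := gen_wt t_gen wg_bil wg_gen.
have [mu [mu_lin muP]] := t2_ex g (fun a z => t a (bk z))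
  (conj (fun a => lin_comp (t_bil.1 a) bk_lin) (fun z => t_bil.2 (bk z))).
have bg_mu : forall x, bg x = mu (p2 x).
  apply: genL => //; first exact: lin_comp mu_lin p2_lin.
  by move=> a x b y; rewrite bg_def brg_def p2_def muP bk_def.
have mu_idpk : forall w, mu (idpk w) = 0.
  apply: (t2_gen g (fun w => mu (idpk w)) (fun _ => 0) (lin_comp mu_lin idpk_lin) (@lin_zero _ _ _)).
  by move=> a z; rewrite idpk_def muP pk_Z2 (lin0 (t_bil.1 a)).
have claim1 : forall x, bg (ft x) = 0 by move=> x; rewrite bg_mu ft_p2 mu_idpk.
have [s [s_lin sP]] := ext_lin bk_lin (lin_sub (@lin_id _ _) pk_lin)
  (fun z hz => ltac:(by rewrite /= pk_id // subrr)).
have [sg [sg_lin sgP]] := t_ex T2 (fun a y => t2 a (s y))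
  (conj (fun a => lin_comp (t2_bil.1 a) s_lin) (fun y => t2_bil.2 (s y))).
have F2 : forall w, mu w = 0 -> idpk w = w.
  have E : forall w, sg (mu w) = w - idpk w.
    apply: (t2_gen T2 (fun w => sg (mu w)) (fun w => w - idpk w) (lin_comp sg_lin mu_lin)
      (lin_sub (@lin_id _ _) idpk_lin)).
    by move=> a z; rewrite muP sgP sP idpk_def (linB (t2_bil.1 a)).
  move=> w hw; have := E w; rewrite hw (lin0 sg_lin) => /eqP.
  by rewrite eq_sym subr_eq0 => /eqP.
have [R [R_lin RP]] := t2_ex T3 (fun c z => t3 (sA c 1) z)
  (conj (fun c => t3_bil.1 (sA c 1)) (fun z => lin_comp (t3_bil.2 z) (sA_bil.2 1))).
have wg_anti := bilin_alt_anti wg_bil wg_alt.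
pose half : K := (2%:R)^-1.
have [Q1 [Q1_lin Q1P]] := @tens_ext_sym K A k LA Sk T1 Lg wA sk t1
  (fun a b x y => half *: (wg (t a x) (t b y) + wg (t a y) (t b x)))
  (fun b x y => lin_scale _ (lin_add (lin_comp (wg_bil.2 (t b y)) (t_bil.2 x))
                                    (lin_comp (wg_bil.2 (t b x)) (t_bil.2 y))))
  (fun a x y => lin_scale _ (lin_add (lin_comp (wg_bil.1 (t a x)) (t_bil.2 y))
                                    (lin_comp (wg_bil.1 (t a y)) (t_bil.2 x))))
  (fun a b y => lin_scale _ (lin_add (lin_comp (wg_bil.2 (t b y)) (t_bil.1 a))
                                    (lin_comp (wg_bil.1 (t a y)) (t_bil.1 b))))
  (fun a b x => lin_scale _ (lin_add (lin_comp (wg_bil.1 (t a x)) (t_bil.1 b))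
                                    (lin_comp (wg_bil.2 (t b x)) (t_bil.1 a))))
  T1_tens LA_ext Sk_sym
  (fun a x y => ltac:(by rewrite /= [wg (t a y) _]wg_anti subrr scaler0))
  (fun a b x y => ltac:(by rewrite /= addrC)).
have [Q3 [Q3_lin Q3P]] := @tens_sym_ext K A k SA Lk T3 Lg sA wk t3
  (fun a b x y => half *: (wg (t a x) (t b y) - wg (t a y) (t b x)))
  (fun b x y => lin_scale _ (lin_sub (lin_comp (wg_bil.2 (t b y)) (t_bil.2 x))
                                    (lin_comp (wg_bil.2 (t b x)) (t_bil.2 y))))
  (fun a x y => lin_scale _ (lin_sub (lin_comp (wg_bil.1 (t a x)) (t_bil.2 y))
                                    (lin_comp (wg_bil.1 (t a y)) (t_bil.2 x))))
  (fun a b y => lin_scale _ (lin_sub (lin_comp (wg_bil.2 (t b y)) (t_bil.1 a))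
                                    (lin_comp (wg_bil.1 (t a y)) (t_bil.1 b))))
  (fun a b x => lin_scale _ (lin_sub (lin_comp (wg_bil.1 (t a x)) (t_bil.1 b))
                                    (lin_comp (wg_bil.2 (t b x)) (t_bil.1 a))))
  T3_tens SA_sym Lk_ext
  (fun a b x y => ltac:(by rewrite /= [wg (t b x) _]wg_anti [wg (t b y) _]wg_anti opprK addrC))
  (fun a b x => ltac:(by rewrite /= subrr scaler0)).
have S : forall x, x = Q1 (p1 x) + Q3 (p3 x + R (p2 x)).
  apply: (genL _ (fun x => x) (fun x => Q1 (p1 x) + Q3 (p3 x + R (p2 x))) (@lin_id _ _)).
    apply: lin_add; first exact: lin_comp Q1_lin p1_lin.
    apply: lin_comp Q3_lin _; apply: lin_add => //; exact: lin_comp R_lin p2_lin.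
  move=> a x b y; rewrite p1_def p3_def p2_def RP -(linD (t3_bil.2 _)) subrK Q1P Q3P.
  rewrite -scalerDr addrACA subrr addr0 -mulr2n -scaler_nat scalerA /half.
  by rewrite mulVf ?scale1r.
have M : forall x, bg x = 0 -> ft x = x.
  move=> x hx; rewrite [RHS]S [LHS]S ft_p1 ft_p3 ft_p2 F2 //.
  by rewrite -bg_mu.
have br_anti := bilin_alt_anti br_bil br_alt.
have jac : forall u v w, brg (brg u v) w + brg (brg v w) u + brg (brg w u) v = 0.
  apply: (gen_tri (J := fun u v w => brg (brg u v) w + brg (brg v w) u + brg (brg w u) v) t_gen).
  - move=> v w; apply: lin_add; first apply: lin_add.
    + exact: lin_comp (brg2 w) (brg2 v).
    + exact: brg1.
    + exact: lin_comp (brg2 v) (brg1 w).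
  - move=> u w; apply: lin_add; first apply: lin_add.
    + exact: lin_comp (brg2 w) (brg1 u).
    + exact: lin_comp (brg2 u) (brg2 w).
    + exact: brg1.
  - move=> u v; apply: lin_add; first apply: lin_add.
    + exact: brg1.
    + exact: lin_comp (brg2 u) (brg1 v).
    + exact: lin_comp (brg2 v) (brg2 u).
  move=> a x b y c z; rewrite /= !brg_def.
  have -> : b * c * a = a * b * c by rewrite mulrC mulrA.
  have -> : c * a * b = a * b * c by rewrite -mulrA mulrC.
  rewrite -!(linD (t_bil.1 _)) (br_anti (br x y)) (br_anti (br y z)) (br_anti (br z x)).
  rewrite -!opprD -addrA addrC br_jac oppr0.
  exact: (lin0 (t_bil.1 _)).
have bgd3 : forall y, bg (d3 y) = 0.
  apply: (w3_gen g (fun y => bg (d3 y)) (fun _ => 0) (lin_comp bg_lin d3_lin) (@lin_zero _ _ _)).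
  by move=> u v w; rewrite d3_def !(linD bg_lin) !bg_def jac.
have linft : forall (z : lmodType K) (phi : Lg -> z),
    (forall (a : K) x y, bg x = 0 -> bg y = 0 -> phi (a *: x + y) = a *: phi x + phi y) ->
    lin (fun x => phi (ft x)).
  by move=> z phi H a x y; rewrite ft_lin H ?claim1.
split; first exact: claim1.
split.
  by move=> x [y <-]; exists y; rewrite M.
move=> z; cbv zeta.
split.
  move=> phi [phiL phiB]; split; first exact: linft.
  by move=> y; rewrite M.
split.
  move=> phi psi [phiL phiB] [psiL psiB] [l [l_lin lP]] x hx.
  have E : forall x, phi (ft x) - psi (ft x) = - l (bg x).
    apply: genL.
    - exact: lin_sub (linft _ _ phiL) (linft _ _ psiL).
    - exact: lin_opp (lin_comp l_lin bg_lin).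
    by move=> a x' b y; rewrite lP bg_def.
  have := E x; rewrite M // hx (lin0 l_lin) oppr0 => /eqP.
  by rewrite subr_eq0 => /eqP.
move=> c c_lin cB; exists c; split.
  by split => // a x y _ _; apply: c_lin.
have h_lin : lin (fun w => - c (Q3 (R (w - idpk w)))).
  apply: lin_opp; apply: lin_comp c_lin _; apply: lin_comp Q3_lin _.
  by apply: lin_comp R_lin _; apply: lin_sub => //; exact: lin_id.
have [l [l_lin lP]] := ext_lin mu_lin h_lin
  (fun w hw => ltac:(by rewrite /= F2 // subrr (lin0 R_lin) (lin0 Q3_lin) (lin0 c_lin) oppr0)).
exists l; split => // u v.
rewrite -bg_def bg_mu lP opprK -(linB c_lin).
set X := wg u v.
have SX := S X; have SfX := S (ft X); rewrite ft_p1 ft_p2 ft_p3 in SfX.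
congr (c _).
rewrite {1}SX SfX opprD addrACA subrr add0r -(linB Q3_lin) opprD addrACA subrr add0r.
by rewrite -(linB R_lin).
Qed.
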